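(* Let $\mathsf V$ be a quantale, $X=(X,a)$ a $\mathsf V$-category, and let $\varphi:E\rightharpoonup X$, $\psi:X\rightharpoonup E$ be $\mathsf V$-modules with $\varphi\dashv\psi$. Then $\psi^*=\psi\cdot\mathrm y_X^*$ and $\psi_*=(\mathrm y_X)_*\cdot\varphi$; explicitly, for every $h\in[X^{\mathrm{op}},\mathsf V]$, $[h,\psi]=\bigvee_{x\in X}[h,x^*]\otimes\psi(x)$ and $[\psi,h]=\bigvee_{x\in X}\varphi(x)\otimes[x^*,h]$.
   Context: A quantale $(\mathsf V,\otimes,k)$ is a complete anti-symmetric lattice with an associative, commutative operation $\otimes$ with neutral element $k$ distributing over arbitrary suprema; $\hom(u,-)$ is the right adjoint of $u\otimes-$. A $\mathsf V$-category $(X,a)$ is a set with $a:X\times X\to\mathsf V$ such that $k\le a(x,x)$ and $a(x,y)\otimes a(y,z)\le a(x,z)$. A $\mathsf V$-module $\varphi:(X,a)\rightharpoonup(Y,b)$ is a map $X\times Y\to\mathsf V$ with $a(x,x')\otimes\varphi(x',y)\le\varphi(x,y)$ and $\varphi(x,y)\otimes b(y,y')\le\varphi(x,y')$; composition $(\psi\cdot\varphi)(x,z)=\bigvee_y\varphi(x,y)\otimes\psi(y,z)$; $\varphi\dashv\psi$ means $a\le\psi\cdot\varphi$ and $\varphi\cdot\psi\le b$. $E=(\{\star\},k)$; modules $E\rightharpoonup X$ and $X\rightharpoonup E$ are identified with maps $X\to\mathsf V$. $[X^{\mathrm{op}},\mathsf V]$ is the $\mathsf V$-category of modules $X\rightharpoonup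 E$ with $[h,h']=\bigwedge_x\hom(h(x),h'(x))$. For a $\mathsf V$-functor $f:(X,a)\to(Y,b)$, $f_*(x,y)=b(f(x),y)$ and $f^*(y,x)=b(y,f(x))$. $\mathrm y_X:X\to[X^{\mathrm{op}},\mathsf V]$, $x\mapsto x^*$ with $x^*(y)=a(y,x)$, is the Yoneda embedding. An element $\psi\in[X^{\mathrm{op}},\mathsf V]$ is regarded as a $\mathsf V$-functor $E\to[X^{\mathrm{op}},\mathsf V]$, giving $\psi_*:E\rightharpoonup[X^{\mathrm{op}},\mathsf V]$, $h\mapsto[\psi,h]$, and $\psi^*:[X^{\mathrm{op}},\mathsf V]\rightharpoonup E$, $h\mapsto[h,\psi]$. *)

(* Defs.v *)
Set Implicit Arguments.

Record quantale := Quantale {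
  qcar :> Type;
  qle : qcar -> qcar -> Prop;
  qle_refl : forall u, qle u u;
  qle_trans : forall u v w, qle u v -> qle v w -> qle u w;
  qle_antisym : forall u v, qle u v -> qle v u -> u = v;
  qsup : (qcar -> Prop) -> qcar;
  qsup_ub : forall (S : qcar -> Prop) u, S u -> qle u (qsup S);
  qsup_least : forall (S : qcar -> Prop) v, (forall u, S u -> qle u v) -> qle (qsup S) v;
  qtens : qcar -> qcar -> qcar;
  qk : qcar;
  qtens_assoc : forall u v w, qtens u (qtens v w) = qtens (qtens u v) w;
  qtens_comm : forall u v, qtens u v = qtens v u;
  qtens_k : forall u, qtens qk u = u;
  qtens_sup : forall u (S : qcar -> Prop),
      qtens u (qsup S) = qsup (fun v => exists w, S w /\ v = qtens u w);
  qhom : qcar -> qcar -> qcar;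
  qhom_adj : forall u v w, qle (qtens u v) w <-> qle v (qhom u w)
}.

Arguments qle {q} _ _.
Arguments qsup {q} _.
Arguments qtens {q} _ _.
Arguments qk {q}.
Arguments qhom {q} _ _.


Definition supI {V : quantale} (I : Type) (f : I -> V) : V := qsup (q:=V) (fun v => exists i, v = f i).
Definition qinf {V : quantale} (S : V -> Prop) : V := qsup (q:=V) (fun v => forall u, S u -> qle v u).
Definition infI {V : quantale} (I : Type) (f : I -> V) : V := qinf (fun v => exists i, v = f i).

Definition is_Vcat {V : quantale} (X : Type) (a : X -> X -> V) : Prop :=
  (forall x, qle qk (a x x)) /\
  (forall x y z, qle (qtens (a x y) (a y z)) (a x z)).

(** V-modules E -/-> X, identified with maps X -> V (phi y = phi(star,y)). *)
Definition is_mod_EX {V : quantale} (X : Type) (a : X -> X -> V) (phi : X -> V) : Prop :=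
  forall y y', qle (qtens (phi y) (a y y')) (phi y').

(** V-modules X -/-> E, identified with maps X -> V (psi x = psi(x,star));
    these are the elements of [X^op, V]. *)
Definition is_mod_XE {V : quantale} (X : Type) (a : X -> X -> V) (psi : X -> V) : Prop :=
  forall x x', qle (qtens (a x x') (psi x')) (psi x).

(** phi -| psi for phi : E -/-> X and psi : X -/-> E:
    k <= (psi . phi)(star,star) and (phi . psi)(x,y) <= a(x,y). *)
Definition mod_adj {V : quantale} (X : Type) (a : X -> X -> V) (phi psi : X -> V) : Prop :=
  qle qk (supI (fun x => qtens (phi x) (psi x))) /\
  (forall x y, qle (qtens (psi x) (phi y)) (a x y)).

Definition pshom {V : quantale} (X : Type) (h h' : X -> V) : V :=
  infI (fun x => qhom (h x) (h' x)).

Definition yon {V : quantale} (X : Type) (a : X -> X -> V) (x : X) : X -> V := fun y => a y x.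

(* Main.v *)
Require Import Defs.

Arguments qtens_k {q} u.
Arguments qtens_comm {q} u v.
Arguments qtens_assoc {q} u v w.
Arguments qle_refl {q} u.
Arguments qle_trans {q} u v w.
Arguments qsup_ub {q} S u.
Arguments qhom_adj {q} u v w.
Arguments qsup_least {q} S v.
Arguments qtens_sup {q} u S.
Arguments qle_antisym {q} u v.

Section S.
Variable V : quantale.

Lemma le_trans' (u v w : V) : qle u v -> qle v w -> qle u w.
Proof. apply qle_trans. Qed.

Lemma tens_monor (w u v : V) : qle u v -> qle (qtens w u) (qtens w v).
Proof.
  intro H.
  assert (E : v = qsup (fun z => z = u \/ z = v)).
  { apply qle_antisym.
    - apply qsup_ub; auto.
    - apply qsup_least. intros z [->| ->]; [exact H| apply qle_refl]. }
  rewrite E, qtens_sup. apply qsup_ub. exists u; auto.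
Qed.

Lemma mono2 (u u' v v' : V) : qle u u' -> qle v v' -> qle (qtens u v) (qtens u' v').
Proof.
  intros H1 H2. apply le_trans' with (qtens u v').
  - apply tens_monor; auto.
  - rewrite (qtens_comm u), (qtens_comm u'). apply tens_monor; auto.
Qed.

Lemma supI_ub (I : Type) (f : I -> V) i : qle (f i) (supI f).
Proof. apply qsup_ub. eauto. Qed.

Lemma supI_least (I : Type) (f : I -> V) c : (forall i, qle (f i) c) -> qle (supI f) c.
Proof. intro H. apply qsup_least. intros u [i ->]. auto. Qed.

Lemma infI_lb (I : Type) (f : I -> V) i : qle (infI f) (f i).
Proof. apply qsup_least. intros u Hu. apply Hu. eauto. Qed.

Lemma infI_glb (I : Type) (f : I -> V) c : (forall i, qle c (f i)) -> qle c (infI f).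
Proof. intro H. apply qsup_ub. intros u [i ->]. auto. Qed.

Lemma tens_supI_le (I : Type) (f : I -> V) t c :
  (forall i, qle (qtens t (f i)) c) -> qle (qtens t (supI f)) c.
Proof.
  intro H. unfold supI. rewrite qtens_sup. apply qsup_least.
  intros v [w [[i ->] ->]]. auto.
Qed.

Lemma hom_app (X : Type) (h g : X -> V) w y :
  qle w (pshom h g) -> qle (qtens (h y) w) (g y).
Proof.
  intro H. apply qhom_adj. eapply le_trans'; [exact H|].
  apply (infI_lb _ (fun x => qhom (h x) (g x))).
Qed.

Lemma hom_intro (X : Type) (h g : X -> V) w :
  (forall y, qle (qtens (h y) w) (g y)) -> qle w (pshom h g).
Proof.
  intro H. apply infI_glb. intro y. apply qhom_adj. auto.
Qed.

End S.


Theorem lemma1p6 (V : quantale) (X : Type) (a : X -> X -> V)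
    (phi psi : X -> V) :
  is_Vcat a ->
  is_mod_EX a phi ->
  is_mod_XE a psi ->
  mod_adj a phi psi ->
  forall h : X -> V, is_mod_XE a h ->
    pshom h psi = supI (fun x => qtens (pshom h (yon a x)) (psi x)) /\
    pshom psi h = supI (fun x => qtens (phi x) (pshom (yon a x) h)).
Proof.
  intros _ Hphi Hpsi [Hk Hc] h Hh. split; apply qle_antisym.
  - set (t := pshom h psi).
    rewrite <- (qtens_k t). apply le_trans' with (qtens t (supI (fun x => qtens (phi x) (psi x)))).
    { rewrite (qtens_comm qk). apply tens_monor. exact Hk. }
    apply tens_supI_le. intro i. rewrite qtens_assoc.
    eapply le_trans'; [| apply (supI_ub _ _ (fun x => qtens (pshom h (yon a x)) (psi x)) i)].
    apply mono2; [| apply qle_refl].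
    apply hom_intro. intro y. unfold yon. rewrite qtens_assoc.
    eapply le_trans'; [apply mono2; [apply hom_app; apply qle_refl | apply qle_refl]|].
    apply Hc.
  - apply supI_least. intro x. apply hom_intro. intro y.
    rewrite qtens_assoc.
    eapply le_trans'; [apply mono2; [apply (hom_app _ _ h (yon a x)); apply qle_refl | apply qle_refl]|].
    apply Hpsi.
  - set (t := pshom psi h).
    rewrite <- (qtens_k t). apply le_trans' with (qtens t (supI (fun x => qtens (phi x) (psi x)))).
    { rewrite (qtens_comm qk). apply tens_monor. exact Hk. }
    apply tens_supI_le. intro i. rewrite (qtens_comm t), <- qtens_assoc.
    eapply le_trans'; [| apply (supI_ub _ _ (fun x => qtens (phi x) (pshom (yon a x) h)) i)].
    apply mono2; [apply qle_refl |].
    apply hom_intro. intro y. unfold yon. rewrite qtens_assoc.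
    eapply le_trans'; [apply mono2; [apply Hpsi | apply qle_refl]|].
    apply hom_app. apply qle_refl.
  - apply supI_least. intro x. apply hom_intro. intro y.
    rewrite qtens_assoc.
    eapply le_trans'; [apply mono2; [apply Hc | apply qle_refl]|].
    apply (hom_app _ _ (yon a x) h). apply qle_refl.
Qed.
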